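(* Let $n\ge2$. The permutation representation $\rho_2^{\mathbb{C}}$ of $S_n$ does not unite conjugacy classes: if $\sigma,\tau\in S_n$ and $\rho_2^{\mathbb{C}}(\sigma)$ is similar to $\rho_2^{\mathbb{C}}(\tau)$ in $GL(n(n-1),\mathbb{C})$, then $\sigma$ and $\tau$ are conjugate in $S_n$.
   Context: For $1\le k\le n$, $\rho_k^{\mathbb{F}}$ denotes the permutation representation over the field $\mathbb{F}$ of $S_n$ arising from its action on ordered $k$-tuples $(i_1,\dots,i_k)$ of distinct elements of $\{1,\dots,n\}$, given by $\pi\cdot(i_1,\dots,i_k)=(\pi(i_1),\dots,\pi(i_k))$. A representation $T$ of $G$ unites conjugacy classes if there are non-conjugate $\sigma,\tau\in G$ with $T(\sigma),T(\tau)$ similar matrices. *)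

(* Defs.v *)
From mathcomp Require Import all_boot all_order all_algebra all_fingroup.
From mathcomp Require Import complex Rstruct.
Set Implicit Arguments. Unset Strict Implicit. Unset Printing Implicit Defensive.
Import GRing.Theory.
Local Open Scope ring_scope.

Definition Cplx : fieldType := (Rdefinitions.R)[i].

Definition dpairs (n : nat) : finType := {x : 'I_n * 'I_n | x.1 != x.2}.

Definition dpair_act (n : nat) (pi : 'S_n) (x : dpairs n) : dpairs n :=
  exist (fun y : 'I_n * 'I_n => y.1 != y.2) (pi (sval x).1, pi (sval x).2)
    (match x as x0 return (pi (sval x0).1 != pi (sval x0).2) with
     | exist y Hy => (contra (fun e => introT eqP (perm_inj (elimT eqP e)))) Hy
     end).

(* rho_2^F(pi): the permutation matrix of the action on distinct pairs,
   indexed by 'I_#|dpairs n| via the enumeration of dpairs n: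
   rho(pi) e_x = e_{pi . x}. *)
Definition rho2 (F : fieldType) (n : nat) (pi : 'S_n) : 'M[F]_#|dpairs n| :=
  \matrix_(a, b) ((enum_val a == dpair_act pi (enum_val b)) : bool)%:R.

Definition mx_similar (F : fieldType) (m : nat) (A B : 'M[F]_m) : Prop :=
  exists2 P : 'M[F]_m, P \in unitmx & A *m P = P *m B.

(* Main.v *)
Require Import Defs.
From mathcomp Require Import all_boot all_order all_algebra all_fingroup.
From mathcomp Require Import complex Rstruct.
From mathcomp Require Import zify.
Set Implicit Arguments. Unset Strict Implicit. Unset Printing Implicit Defensive.

Section Comb.
Variable T : finType.
Implicit Types s t : {perm T}.
Local Notation ford s := (@fingraph.order T (s : T -> T)).

Lemma iter_mul_order s q x : iter (q * ford s x) s x = x.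
Proof.
elim: q => [|q IH]; first by [].
by rewrite mulSn iterD IH iter_order //; apply: perm_inj.
Qed.

Lemma iter_dvd s k x : (iter k s x == x) = (ford s x %| k).
Proof.
apply/idP/idP; last by case/dvdnP=> q ->; rewrite iter_mul_order.
move=> /eqP H; rewrite /dvdn; apply/eqP.
move: H; rewrite {1}(divn_eq k (ford s x)) addnC iterD iter_mul_order => H.
have := findex_iter (ltn_pmod k (fingraph.order_gt0 s x)).
by rewrite H findex0.
Qed.

Definition gfix s k := #|[set x | iter k s x == x]|.

Lemma iter_fixS s k y : (iter k s (s y) == s y) = (iter k s y == y).
Proof. by rewrite -iterSr iterS (inj_eq perm_inj). Qed.

Lemma two_fix s e y : s y != y -> iter e s y = y -> 1 < gfix s e.
Proof.
move=> ne it; apply/card_gt1P; exists (s y), y; rewrite !inE ne iter_fixS it.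
by rewrite eqxx.
Qed.

Lemma dvd_card_closed s m (A : {set T}) :
  (forall y, (s y \in A) = (y \in A)) ->
  (forall y, y \in A -> ford s y = m) -> m %| #|A|.
Proof.
move=> cl ord; have := @fcard_order_set _ s (perm_inj (s:=s)) m (mem A).
move=> H; rewrite -H ?dvdn_mull //.
  apply/subsetP => y yA; rewrite /order_set inE; apply/eqP; exact: ord.
by move=> x y /= /eqP <-; rewrite cl.
Qed.

Lemma zero_one s t : 1 < #|T| -> gfix s 1 = 1 -> gfix t 1 = 0 ->
  (forall j, 1 < gfix s j -> gfix s j = gfix t j) ->
  (forall j, 1 < gfix t j -> gfix s j = gfix t j) -> False.
Proof.
move=> hT gs1 gt1 Es Et.
have exP : exists j, (0 < j) && (1 < gfix s j).
  exists #[s]%g; rewrite order_gt0 /=.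
  rewrite /gfix; suff -> : [set x | iter #[s]%g s x == x] = setT by rewrite cardsT.
  by apply/setP=> x; rewrite !inE -permX expg_order perm1 eqxx.
case: (ex_minnP exP) => m /andP[m0 gm] minm.
have small : forall j, 0 < j < m -> gfix s j <= 1 /\ gfix t j <= 1.
  move=> j /andP[j0 jm].
  have hs : gfix s j <= 1.
    rewrite leqNgt; apply/negP => h; have := minm j; rewrite j0 h => /(_ isT).
    by rewrite leqNgt jm.
  split=> //; rewrite leqNgt; apply/negP => h; move: hs.
  by rewrite (Et j h) leqNgt h.
have m1 : m != 1 by apply: contraTneq gm => ->; rewrite gs1.
have tfree : forall y, t y != y.
  move=> y; apply/negP => /eqP ty.
  have : y \in [set x | iter 1 t x == x] by rewrite inE /= ty.
  by rewrite (cards0_eq gt1) inE.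
have /cards1P [x defx] : #|[set x | iter 1 s x == x]| == 1 by apply/eqP.
have xfix : s x = x by have := set11 x; rewrite -defx inE => /eqP.
have dt : m %| gfix t m.
  apply: (@dvd_card_closed t) => [y|y]; first by rewrite !inE iter_fixS.
  rewrite inE iter_dvd => dv; apply/eqP; rewrite eqn_leq dvdn_leq //=.
  rewrite leqNgt; apply/negP => lt.
  have e0 := fingraph.order_gt0 t y.
  have /small [_] : 0 < ford t y < m by rewrite e0 lt.
  by rewrite leqNgt (two_fix (tfree y)) //; apply/eqP; rewrite iter_dvd.
set A := [set y | iter m s y == y] :\ x.
have cA : #|A| = (gfix s m).-1.
  have xm : iter m s x == x by apply/eqP; elim: (m) => //= k ->; rewrite xfix.
  by rewrite /gfix [in RHS](cardsD1 x) inE xm.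
have ds : m %| #|A|.
  apply: (@dvd_card_closed s) => [y|y].
    rewrite !inE iter_fixS; congr (_ && _).
    by rewrite -{1}xfix (inj_eq perm_inj).
  rewrite !inE iter_dvd => /andP[yx dv]; apply/eqP; rewrite eqn_leq dvdn_leq //=.
  rewrite leqNgt; apply/negP => lt.
  have e0 := fingraph.order_gt0 s y.
  have /small [hs _] : 0 < ford s y < m by rewrite e0 lt.
  move: hs; rewrite leqNgt => /negP; apply; apply/card_gt1P; exists x, y.
  rewrite !inE (eq_sym x) yx; split=> //; last by rewrite iter_dvd.
  by apply/eqP; elim: (fingraph.order s y) => //= k ->; rewrite xfix.
rewrite cA (Es m gm) in ds.
have := dvdn_sub dt ds.
have hp : 0 < gfix t m by rewrite -(Es m gm) (ltnW gm).
have e : gfix t m - (gfix t m).-1 = 1.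
  by move: hp; case: (gfix t m) => [|k] //= _; rewrite subSn // subnn.
rewrite e dvdn1 => /eqP m1'.
by rewrite m1' in m1.
Qed.

Lemma gfixX s k j : gfix (s ^+ k)%g j = gfix s (k * j).
Proof.
rewrite /gfix; apply: eq_card => x; rewrite !inE -!permX.
by rewrite -expgM.
Qed.

Lemma hinj a b : a * a.-1 = b * b.-1 -> 1 < a -> a = b.
Proof.
rewrite -!subn1 => e a1; have : 1 < b.
  case: b e => [|[|b]] //=; rewrite ?muln0 ?mul0n => /eqP; rewrite muln_eq0 => /orP[] /eqP; lia.
move=> b1; nia.
Qed.

Lemma fix_all s t : 1 < #|T| ->
  (forall k, gfix s k * (gfix s k).-1 = gfix t k * (gfix t k).-1) ->
  forall k, gfix s k = gfix t k.
Proof.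
move=> hT H.
have Es : forall k, 1 < gfix s k -> gfix s k = gfix t k by move=> k; apply: hinj.
have Et : forall k, 1 < gfix t k -> gfix s k = gfix t k.
  by move=> k h; apply/esym/hinj => //; rewrite H.
move=> k; case: (ltnP 1 (gfix s k)) => [/Es //|hs].
case: (ltnP 1 (gfix t k)) => [/Et //|ht].
case: (gfix s k =P gfix t k) => // ne; exfalso.
have Es' : forall j, 1 < gfix (s^+k)%g j -> gfix (s^+k)%g j = gfix (t^+k)%g j.
  by move=> j; rewrite !gfixX; apply: Es.
have Et' : forall j, 1 < gfix (t^+k)%g j -> gfix (s^+k)%g j = gfix (t^+k)%g j.
  by move=> j; rewrite !gfixX; apply: Et.
move: hs ht ne; rewrite -[k]muln1 -!gfixX => hs ht ne.
have [[a1 b0]|[a0 b1]] : (gfix (s^+k)%g 1 = 1 /\ gfix (t^+k)%g 1 = 0) \/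
    (gfix (s^+k)%g 1 = 0 /\ gfix (t^+k)%g 1 = 1) by lia.
  exact: (zero_one hT a1 b0 Es' Et').
by apply: (zero_one hT b1 a0) => j h; apply/esym; [exact: Et' | exact: Es'].
Qed.

Lemma iter_mod s x m : iter m s x = iter (m %% ford s x) s x.
Proof. by rewrite {1}(divn_eq m (ford s x)) addnC iterD iter_mul_order. Qed.

Lemma findex_iterm s x m : findex s x (iter m s x) = m %% ford s x.
Proof.
by rewrite iter_mod findex_iter // ltn_pmod // fingraph.order_gt0.
Qed.

Lemma ford_conn s x z : fconnect s x z -> ford s z = ford s x.
Proof.
move=> c; rewrite /fingraph.order; apply: eq_card => w.
by rewrite /in_mem /= (same_connect (fconnect_sym (@perm_inj _ s)) c).
Qed.

Lemma closed_conn (A : {set T}) s x z :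
  (forall y, (s y \in A) = (y \in A)) -> fconnect s x z -> x \in A -> z \in A.
Proof.
move=> cl c xA; rewrite -(iter_findex c).
by elim: (findex s x z) => //= i IH; rewrite cl.
Qed.

Definition cnt s (A : {set T}) k := #|[set x in A | iter k s x == x]|.

Lemma cnt_orbit s x k :
  cnt s [set z | fconnect s x z] k = if ford s x %| k then ford s x else 0.
Proof.
rewrite /cnt; case: ifP => dk.
  rewrite /fingraph.order; apply: eq_card => z; rewrite !inE.
  apply/andP/idP => [[] //|c]; split => //.
  by rewrite iter_dvd (ford_conn c).
apply: eq_card0 => z; rewrite !inE; apply/negP => /andP[c].
by rewrite iter_dvd (ford_conn c) dk.
Qed.

Lemma cnt_setD s (A O : {set T}) k : O \subset A ->
  cnt s (A :\: O) k = cnt s A k - cnt s O k.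
Proof.
move=> OA; rewrite /cnt.
have -> : [set x in A :\: O | iter k s x == x] =
   [set x in A | iter k s x == x] :\: [set x in O | iter k s x == x].
  apply/setP => x; rewrite !inE; case: (x \in O); case: (x \in A);
   case: (iter k s x == x) => //.
rewrite cardsD (setIidPr _) //.
apply/subsetP => x; rewrite !inE => /andP[xO ->]; rewrite andbT.
exact: (subsetP OA).
Qed.

Lemma closed_orbit s x : forall y, (s y \in [set z | fconnect s x z]) =
  (y \in [set z | fconnect s x z]).
Proof.
by move=> y; rewrite !inE -same_fconnect1_r //; apply: perm_inj.
Qed.

Lemma iso (s t : {perm T}) N : forall A B : {set T}, #|A| <= N ->
  (forall y, (s y \in A) = (y \in A)) -> (forall y, (t y \in B) = (y \in B)) ->
  (forall k, cnt s A k = cnt t B k) ->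
  exists h : T -> T, [/\ {in A &, injective h}, {in A, forall x, h x \in B}
                     & {in A, forall x, h (s x) = t (h x)}].
Proof.
have empty : forall A B : {set T}, A = set0 ->
  exists h : T -> T, [/\ {in A &, injective h}, {in A, forall x, h x \in B}
                     & {in A, forall x, h (s x) = t (h x)}].
  by move=> A B ->; exists id; split=> x; rewrite inE.
elim: N => [|N IH] A B cA clA clB E.
  by apply: empty; apply/cards0_eq; move: cA; rewrite leqn0 => /eqP.
case: (set_0Vmem A) => [/empty //|[x1 x1A]].
case: (arg_minnP (ford s) x1A) => x0 x0A' minx.
have x0A : x0 \in A := x0A'.
set d := ford s x0.
have dpos : 0 < d := fingraph.order_gt0 s x0.
have cntA0 : forall j, 0 < j < d -> cnt s A j = 0.
  move=> j /andP[j0 jd]; apply: eq_card0 => x; rewrite !inE.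
  apply/negP => /andP[xA]; rewrite iter_dvd => dv.
  have := dvdn_leq j0 dv; have := minx x xA; rewrite -/d; lia.
have [y0 y0B ty0] : exists2 y0, y0 \in B & iter d t y0 == y0.
  have : 0 < cnt t B d.
    rewrite -E; apply/card_gt0P; exists x0; rewrite !inE iter_dvd dvdnn andbT; exact: x0A.
  by case/card_gt0P => y; rewrite !inE => /andP[? ?]; exists y.
have dy0 : ford t y0 = d.
  move: ty0; rewrite iter_dvd => dv; have e0 := fingraph.order_gt0 t y0.
  apply/eqP; rewrite eqn_leq dvdn_leq //=; rewrite leqNgt; apply/negP => lt.
  have := cntA0 (ford t y0); rewrite e0 lt => /(_ isT); rewrite E => /eqP.
  rewrite cards_eq0 => /eqP /setP /(_ y0).
  by rewrite !inE y0B iter_dvd dvdnn.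
set O := [set z | fconnect s x0 z].
set O' := [set z | fconnect t y0 z].
have OA : O \subset A.
  by apply/subsetP => z; rewrite inE => c; apply: (closed_conn clA c).
have OB : O' \subset B.
  by apply/subsetP => z; rewrite inE => c; apply: (closed_conn clB c).
have clA' : forall y, (s y \in A :\: O) = (y \in A :\: O).
  by move=> y; have := closed_orbit s x0 y; rewrite !inE clA => ->.
have clB' : forall y, (t y \in B :\: O') = (y \in B :\: O').
  by move=> y; have := closed_orbit t y0 y; rewrite !inE clB => ->.
have E' : forall k, cnt s (A :\: O) k = cnt t (B :\: O') k.
  by move=> k; rewrite !cnt_setD // !cnt_orbit dy0 -/d E.
have cA' : #|A :\: O| <= N.
  have : 0 < #|A :&: O| by apply/card_gt0P; exists x0; rewrite !inE x0A connect0.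
  move: cA; rewrite cardsD; lia.
have [h' [inj' map' com']] := IH _ _ cA' clA' clB' E'.
pose h x := if x \in O then iter (findex s x0 x) t y0 else h' x.
have hO : forall m, h (iter m s x0) = iter m t y0.
  move=> m; rewrite /h inE fconnect_iter findex_iterm -/d.
  by rewrite [RHS]iter_mod dy0.
have hOm : forall x, x \in O -> h x \in O'.
  by move=> x xO; rewrite /h xO inE fconnect_iter.
have hnO : forall x, x \in A -> x \notin O -> h x \in B :\: O'.
  by move=> x xA xO; rewrite /h (negbTE xO); apply: map'; rewrite inE xO.
exists h; split.
- move=> x x' xA x'A.
  case xO: (x \in O); case x'O: (x' \in O).
  + move: xO x'O; rewrite !inE => c c'.
    rewrite -(iter_findex c) -(iter_findex c') !hO => e.
    have := findex_iterm t y0 (findex s x0 x); rewrite e findex_iterm dy0.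
    by rewrite !modn_small ?findex_max // => ->.
  + move=> e; have := hOm x; rewrite xO e => /(_ isT).
    by have := hnO x' x'A; rewrite x'O => /(_ isT); rewrite inE => /andP[/negbTE ->].
  + move=> e; have := hOm x'; rewrite x'O -e => /(_ isT).
    by have := hnO x xA; rewrite xO => /(_ isT); rewrite inE => /andP[/negbTE ->].
  + rewrite /h xO x'O; apply: inj'; by rewrite inE ?xO ?x'O.
- move=> x xA; case xO: (x \in O).
    by apply: (subsetP OB); apply: hOm.
  by have := hnO x xA; rewrite xO => /(_ isT); rewrite inE => /andP[].
- move=> x xA; case xO: (x \in O).
    move: xO; rewrite inE => c.
    by rewrite -(iter_findex c) -iterS !hO.
  have sxO : (s x \in O) = false by rewrite closed_orbit.
  rewrite /h xO sxO; apply: com'; by rewrite inE xO.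
Qed.
End Comb.


Section LA.
Import GRing.Theory Num.Theory.
Local Open Scope ring_scope.
Variable F : fieldType.
Variable n : nat.

Lemma dpair_actM (p q : 'S_n) x :
  dpair_act p (dpair_act q x) = dpair_act (q * p)%g x.
Proof. by apply: val_inj; rewrite /= !permM. Qed.

Lemma rho2M (p q : 'S_n) : rho2 F p *m rho2 F q = rho2 F (q * p)%g.
Proof.
apply/matrixP => a b; rewrite !mxE.
rewrite (bigD1 (enum_rank (dpair_act q (enum_val b)))) //= big1 ?addr0.
  rewrite !mxE enum_rankK eqxx mulr1 dpair_actM //.
move=> c /negbTE ne; rewrite !mxE.
suff -> : (enum_val c == dpair_act q (enum_val b)) = false by rewrite mulr0.
apply: contraFF ne => /eqP <-; by rewrite enum_valK.
Qed.

Lemma rho2X (p : 'S_n) k : rho2 F (p ^+ k.+1)%g = rho2 F (p ^+ k)%g *m rho2 F p.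
Proof. by rewrite rho2M expgS. Qed.

Lemma sim_pow (p q : 'S_n) P : rho2 F p *m P = P *m rho2 F q ->
  forall k, rho2 F (p ^+ k)%g *m P = P *m rho2 F (q ^+ k)%g.
Proof.
move=> H; elim=> [|k IH].
  have r1 : rho2 F (1%g : 'S_n) = (1%:M : 'M[F]_#|dpairs n|).
    apply/matrixP => a b; rewrite !mxE.
    have -> : dpair_act 1%g (enum_val b) = enum_val b by apply: val_inj; rewrite /= !perm1; case: (sval _).
    by rewrite (inj_eq enum_val_inj).
  by rewrite !expg0 r1 mul1mx mulmx1.
by rewrite !rho2X -mulmxA H mulmxA IH mulmxA.
Qed.

Lemma tr_rho2 (p : 'S_n) :
  \tr (rho2 F p) = (#|[set x : dpairs n | dpair_act p x == x]|)%:R.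
Proof.
rewrite /mxtrace.
under eq_bigr do rewrite mxE eq_sym.
rewrite -(big_enum_val (fun x : dpairs n => ((dpair_act p x == x) : bool)%:R)).
rewrite -natr_sum; congr (_ %:R).
rewrite -sum1dep_card [RHS]big_mkcond big_mkcond /=; apply: eq_bigr => x _.
by case: (_ == _).
Qed.
End LA.


Lemma card_pairs_fix n (p : 'S_n) :
  #|[set x : dpairs n | dpair_act p x == x]| =
  #|[set i | p i == i]| * (#|[set i | p i == i]|).-1.
Proof.
set Fx := [set i | p i == i].
have -> : #|[set x : dpairs n | dpair_act p x == x]| =
   #|[set y : 'I_n * 'I_n | (y.1 != y.2) && (y.1 \in Fx) && (y.2 \in Fx)]|.
  rewrite -(card_imset _ val_inj); apply: eq_card => y; rewrite !inE.
  apply/imsetP/idP.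
    case=> x; rewrite inE => /eqP e ->.
    case: x e => [[a b] h] /= e.
    have /(congr1 val) /= [ea eb] := e.
    by rewrite h ea eb !eqxx.
  case: y => a b /= /andP[/andP[h ha] hb].
  exists (exist (fun y : 'I_n * 'I_n => y.1 != y.2) (a, b) h) => //.
  by rewrite inE; apply/eqP/val_inj; rewrite /= (eqP ha) (eqP hb).
rewrite -sum1dep_card big_mkcond /=.
rewrite -(pair_big xpredT xpredT (fun i j => if (i != j) && (i \in Fx) && (j \in Fx) then 1 else 0)%N) /=.
rewrite (eq_bigr (fun i => if i \in Fx then #|Fx|.-1 else 0)%N).
  by rewrite -big_mkcond /= sum_nat_const.
move=> i _; case iF: (i \in Fx); last by rewrite big1 // => j _; rewrite andbF.
rewrite (cardsD1 i Fx) iF /= add0n. rewrite -sum1_card [RHS]big_mkcond /=.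
apply: eq_bigr => j _; rewrite !inE andbT.
by rewrite eq_sym; case: (j != i); case: (j \in Fx).
Qed.


Section Main.
Import GRing.Theory Num.Theory.
Local Open Scope ring_scope.

Lemma natC_inj (a b : nat) : (a%:R : Cplx) = b%:R -> a = b.
Proof.
move=> e. have e' : (a%:R : (Rdefinitions.R)[i]) = b%:R := e.
by apply/eqP; rewrite -(eqr_nat (Rdefinitions.R)[i]) e'.
Qed.

Theorem mainTheorem10 (n : nat) (hn : (2 <= n)%N) (sigma tau : 'S_n) :
  mx_similar (rho2 Cplx sigma) (rho2 Cplx tau) ->
  exists g : 'S_n, tau = (sigma ^ g)%g.
Proof.
case=> P Pu H.
have Hk := sim_pow H.
have tr : forall k, (gfix sigma k * (gfix sigma k).-1 = gfix tau k * (gfix tau k).-1)%N.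
  move=> k.
  have e1 : forall p : 'S_n, gfix p k = #|[set i | (p ^+ k)%g i == i]|.
    by move=> p; apply: eq_card => i; rewrite !inE permX.
  rewrite !e1 -!card_pairs_fix.
  apply: natC_inj.
  rewrite -!tr_rho2.
  have -> : rho2 Cplx (sigma ^+ k)%g = P *m rho2 Cplx (tau ^+ k)%g *m invmx P.
    by rewrite -(Hk k) mulmxK.
  rewrite mxtrace_mulC mulmxA.
  rewrite mulVmx //.
  by rewrite mul1mx.
have hn' : (1 < #|'I_n|)%N by rewrite card_ord.
have all := fix_all hn' tr.
have E : forall k, cnt sigma setT k = cnt tau setT k.
  move=> k; rewrite /cnt.
  have e2 : forall p : 'S_n, #|[set x in setT | iter k p x == x]| = gfix p k.
    by move=> p; apply: eq_card => i; rewrite !inE.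
  by rewrite !e2 all.
have c1 : forall y, (sigma y \in [set: 'I_n]) = (y \in [set: 'I_n]) by move=> y; rewrite !inE.
have c2 : forall y, (tau y \in [set: 'I_n]) = (y \in [set: 'I_n]) by move=> y; rewrite !inE.
have [h [hinj _ hcom]] := @iso _ sigma tau #|'I_n| setT setT (max_card _) c1 c2 E.
have hi : injective h by move=> x y; apply: hinj; rewrite inE.
pose g := perm hi.
have gE : forall x, g x = h x by move=> x; rewrite permE.
exists g; apply/permP => x.
have [y ->] : exists y, x = g y by exists (g^-1 x)%g; rewrite permKV.
rewrite permJ gE gE.
by rewrite hcom // inE.
Qed.
End Main.
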